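(* For an ideal $\mathcal{I}$ on $\omega$, the following are equivalent: (1) Player I has a winning strategy in the HMM game with respect to $\mathcal{I}$; (2) Player II has a winning strategy in the tallness game with respect to $\mathcal{I}$; (3) $\mathcal{ED}_{\mathrm{fin}}\le_{\mathrm{KB}}\mathcal{I}$.
   Context: Ideals on $\omega$ are assumed to contain all finite sets. $\mathcal{ED}$ is the ideal on $\omega\times\omega$ generated by the vertical lines $\{n\}\times\omega$ and the graphs of functions from $\omega$ to $\omega$. $\Delta=\{(m,n)\in\omega^2: n\le m\}$ and $\mathcal{ED}_{\mathrm{fin}}=\{A\cap\Delta: A\in\mathcal{ED}\}$, an ideal on the countable set $\Delta$. For ideals $\mathcal{J}$ on $X$ and $\mathcal{I}$ on $Y$, $\mathcal{J}\le_{\mathrm{KB}}\mathcal{I}$ means there is a finite-to-one $f:Y\to X$ with $f^{-1}(J)\in\mathcal{I}$ for every $J\in\mathcal{J}$. Tallness game with respect to $\mathcal{I}$: at round $k$, Player I plays $n_k\in\omega$ with $n_0<n_1<\cdots$, then Player II plays $i_k\in\{0,1\}$; Player II wins iff $\{n_k: i_k=1\}$ is infinite and belongs to $\mathcal{I}$. HMM game with respect to $\mathcal{I}$: at round $k$, Player I plays a finite set $F_k\subseteq\omega$, then Player II plays $n_k\in\omega\setminus F_k$; Player I wins iff $\{n_k:k\in\omega\}\in\mathcal{I}$. *)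

(* Defs.v *)
From Stdlib Require Import List Arith.
Import ListNotations.

Definition finite_nat (A : nat -> Prop) : Prop :=
  exists N, forall n, A n -> n < N.

Definition infinite_nat (A : nat -> Prop) : Prop :=
  forall N, exists m, N <= m /\ A m.

Definition is_ideal (I : (nat -> Prop) -> Prop) : Prop :=
  (forall A B : nat -> Prop, I B -> (forall n, A n -> B n) -> I A) /\
  (forall A B : nat -> Prop, I A -> I B -> I (fun n => A n \/ B n)) /\
  (forall A : nat -> Prop, finite_nat A -> I A) /\
  ~ I (fun _ => True).

(* ED: the ideal on omega x omega generated by the vertical lines {n} x omega
   and the graphs of functions omega -> omega, i.e. the sets covered by
   finitely many vertical lines and finitely many graphs. *)
Definition ED (A : nat * nat -> Prop) : Prop :=
  exists (N : nat) (fs : list (nat -> nat)),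
    forall p q, A (p, q) -> p < N \/ exists f, In f fs /\ q = f p.

Definition Delta : Type := { p : nat * nat | snd p <= fst p }.

Definition ED_fin (J : Delta -> Prop) : Prop :=
  exists A : nat * nat -> Prop, ED A /\ forall d : Delta, J d <-> A (proj1_sig d).

Definition KB_le {X : Type} (J : (X -> Prop) -> Prop) (I : (nat -> Prop) -> Prop) : Prop :=
  exists f : nat -> X,
    (forall x : X, finite_nat (fun n => f n = x)) /\
    (forall B : X -> Prop, J B -> I (fun n => B (f n))).

Definition prefix (s : nat -> nat) (k : nat) : list nat := map s (seq 0 k).

(* Tallness game. A strategy for Player II maps the moves n_0,...,n_k of
   Player I made so far to i_k (true = 1). *)
Definition tall_strategy_II := list nat -> bool.

Definition strictly_increasing (s : nat -> nat) : Prop :=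
  forall k, s k < s (S k).

Definition II_wins_tallness (I : (nat -> Prop) -> Prop) (sigma : tall_strategy_II) : Prop :=
  forall s : nat -> nat, strictly_increasing s ->
    let W := fun m => exists k, s k = m /\ sigma (prefix s (S k)) = true in
    infinite_nat W /\ I W.

(* HMM game. A strategy for Player I maps the moves n_0,...,n_{k-1} of
   Player II so far to a finite set F_k (given as a list). *)
Definition hmm_strategy_I := list nat -> list nat.

Definition I_wins_HMM (I : (nat -> Prop) -> Prop) (sigma : hmm_strategy_I) : Prop :=
  forall s : nat -> nat, (forall k, ~ In (s k) (sigma (prefix s k))) ->
    I (fun m => exists k, s k = m).

(* Main.v *)
Require Import Defs.
From Stdlib Require Import List Arith Lia ClassicalEpsilon Classical Bool.
Import ListNotations.

Section Ideal.
Variable I : (nat -> Prop) -> Prop.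
Hypothesis HI : is_ideal I.

Lemma I_mono : forall A B : nat -> Prop, I B -> (forall n, A n -> B n) -> I A.
Proof. destruct HI as [H _]; exact H. Qed.
Lemma I_union : forall A B : nat -> Prop, I A -> I B -> I (fun n => A n \/ B n).
Proof. destruct HI as [_ [H _]]; exact H. Qed.
Lemma I_fin : forall A : nat -> Prop, finite_nat A -> I A.
Proof. destruct HI as [_ [_ [H _]]]; exact H. Qed.
End Ideal.

Lemma prefix_S : forall s k, prefix s (S k) = prefix s k ++ [s k].
Proof. intros. unfold prefix. rewrite seq_S, map_app. reflexivity. Qed.

Lemma prefix_length : forall s k, length (prefix s k) = k.
Proof. intros. unfold prefix. rewrite length_map, length_seq. reflexivity. Qed.

Lemma In_prefix : forall s k x, In x (prefix s k) -> exists j, j < k /\ s j = x.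
Proof. intros s k x H. unfold prefix in H. apply in_map_iff in H.
  destruct H as [j [Hj Hin]]. apply in_seq in Hin. exists j. split; [lia|auto]. Qed.

Lemma strinc_ge : forall s, strictly_increasing s -> forall k, k <= s k.
Proof. intros s Hs k. induction k. lia. specialize (Hs k). lia. Qed.

Lemma strinc_lt : forall s, strictly_increasing s -> forall j k, j < k -> s j < s k.
Proof. intros s Hs j k H. induction H. apply Hs. specialize (Hs m). lia. Qed.

Lemma finite_bunion : forall (P : nat -> nat -> Prop) c,
  (forall i, i <= c -> finite_nat (P i)) -> finite_nat (fun n => exists i, i <= c /\ P i n).
Proof.
  intros P c. induction c; intros H.
  - destruct (H 0 (le_n 0)) as [N HN]. exists N. intros n [i [Hi Hp]].
    assert (i = 0) by lia. subst. auto.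
  - destruct IHc as [N1 H1]. intros i Hi; apply H; lia.
    destruct (H (S c) (le_n _)) as [N2 H2]. exists (N1 + N2). intros n [i [Hi Hp]].
    destruct (Nat.eq_dec i (S c)). subst. specialize (H2 n Hp). lia.
    assert (n < N1) by (apply H1; exists i; split; [lia|auto]). lia.
Qed.

Lemma least_bool : forall (p : nat -> bool) k, p k = true ->
  exists j, p j = true /\ forall i, i < j -> p i = false.
Proof.
  intros p k. induction k as [k IH] using lt_wf_ind. intros Hk.
  destruct (classic (exists i, i < k /\ p i = true)) as [[i [Hi Hpi]]|Hn].
  - apply (IH i Hi Hpi).
  - exists k. split; auto. intros i Hi. destruct (p i) eqn:E; auto.
    exfalso. apply Hn. eauto.
Qed.

Section ThreeTwo.
Variable I : (nat -> Prop) -> Prop.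
Hypothesis HI : is_ideal I.
Variable f : nat -> Delta.
Hypothesis Hfin : forall x : Delta, finite_nat (fun n => f n = x).
Hypothesis Hpull : forall B : Delta -> Prop, ED_fin B -> I (fun n => B (f n)).

Definition col n := fst (proj1_sig (f n)).

Definition tau3 (l : list nat) : bool :=
  match rev l with
  | [] => false
  | x :: r => forallb (fun y => negb (Nat.eqb (col y) (col x))) r
  end.

Lemma col_fin : forall c, finite_nat (fun n => col n <= c).
Proof.
  intros c.
  assert (H : finite_nat (fun n => exists p, p <= c /\ exists q, q <= p /\ proj1_sig (f n) = (p, q))).
  { apply finite_bunion. intros p Hp. apply finite_bunion. intros q Hq.
    destruct (Hfin (exist _ (p, q) Hq)) as [N HN]. exists N. intros n Hn. apply HN.
    destruct (f n) as [[p' q'] h]. simpl in Hn. injection Hn; intros; subst.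
    f_equal. apply le_unique. }
  destruct H as [N HN]. exists N. intros n Hn. apply HN. exists (col n). split; auto.
  exists (snd (proj1_sig (f n))). unfold col. destruct (f n) as [[p q] h]. simpl. split; auto.
Qed.

Lemma tau3_spec : forall s k, tau3 (prefix s (S k)) = true <-> forall j, j < k -> col (s j) <> col (s k).
Proof.
  intros s k. unfold tau3. rewrite prefix_S, rev_app_distr. simpl.
  rewrite forallb_forall. split.
  - intros H j Hj E. assert (Hin : In (s j) (rev (prefix s k))).
    { rewrite <- in_rev. unfold prefix. apply in_map. apply in_seq. lia. }
    specialize (H _ Hin). rewrite E, Nat.eqb_refl in H. discriminate.
  - intros H y Hy. rewrite <- in_rev in Hy. apply In_prefix in Hy.
    destruct Hy as [j [Hj E]]. subst. specialize (H j Hj).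
    apply Nat.eqb_neq in H. rewrite H. reflexivity.
Qed.

Lemma three_two : II_wins_tallness I tau3.
Proof.
  intros s Hs W. split.
  - intros N.
    destruct (col_fin (list_max (map (fun j => col (s j)) (seq 0 (S N))))) as [B HB].
    set (k := Nat.max B N).
    assert (Hk : list_max (map (fun j => col (s j)) (seq 0 (S N))) < col (s k)).
    { destruct (Nat.lt_ge_cases (list_max (map (fun j => col (s j)) (seq 0 (S N)))) (col (s k))); auto.
      specialize (HB _ H). pose proof (strinc_ge s Hs k). lia. }
    destruct (least_bool (fun j => Nat.eqb (col (s j)) (col (s k))) k) as [j [Hj Hmin]].
    { apply Nat.eqb_refl. }
    apply Nat.eqb_eq in Hj.
    assert (HjN : N < j).
    { destruct (Nat.lt_ge_cases N j); auto. exfalso.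
      assert (col (s j) <= list_max (map (fun j => col (s j)) (seq 0 (S N)))).
      { pose proof (proj1 (list_max_le (map (fun j => col (s j)) (seq 0 (S N))) _) (le_n _)) as F.
        rewrite Forall_forall in F. apply F. apply in_map_iff. exists j. split; auto. apply in_seq. lia. }
      lia. }
    exists (s j). split. pose proof (strinc_ge s Hs j). lia.
    exists j. split; auto. apply tau3_spec. intros i Hi E. specialize (Hmin i Hi).
    rewrite E, Hj, Nat.eqb_refl in Hmin. discriminate.
  - set (A := fun pq : nat * nat => exists m, W m /\ proj1_sig (f m) = pq).
    assert (Huniq : forall m m', W m -> W m' -> col m = col m' -> m = m').
    { intros m m' [k [Hk Hk']] [k' [Hl Hl']] E. subst.
      rewrite tau3_spec in Hk', Hl'.
      destruct (Nat.lt_total k k') as [Hlt|[Heq|Hgt]].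
      - exfalso. apply (Hl' k Hlt). auto.
      - subst; auto.
      - exfalso. apply (Hk' k' Hgt). auto. }
    assert (HED : ED A).
    { exists 0, [fun p => epsilon (inhabits 0) (fun q => A (p, q))].
      intros p q Hpq. right. eexists. split. left. reflexivity.
      pose proof (epsilon_spec (inhabits 0) (fun q => A (p, q)) (ex_intro _ q Hpq)) as He.
      cbv beta in He. set (q' := epsilon _ _) in *.
      destruct Hpq as [m [Hm Em]]. destruct He as [m' [Hm' Em']].
      assert (col m = col m') by (unfold col; rewrite Em, Em'; reflexivity).
      pose proof (Huniq _ _ Hm Hm' H). subst. rewrite Em in Em'. injection Em'. auto. }
    assert (HB : ED_fin (fun d => A (proj1_sig d))).
    { exists A. split; auto. intros; tauto. }
    apply (I_mono I HI _ _ (Hpull _ HB)). intros m Hm. exists m. auto.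
Qed.
End ThreeTwo.

Fixpoint words (n a : nat) : list (list nat) :=
  match n with
  | 0 => [[]]
  | S n' => flat_map (fun x => map (cons x) (words n' a)) (seq 0 a)
  end.

Lemma words_in : forall l a, (forall x, In x l -> x < a) -> In l (words (length l) a).
Proof.
  induction l; intros a0 H; simpl. auto.
  apply in_flat_map. exists a. split. apply in_seq. specialize (H a (or_introl eq_refl)). lia.
  apply in_map. apply IHl. intros; apply H; simpl; auto.
Qed.

Section OneThree.
Variable I : (nat -> Prop) -> Prop.
Hypothesis HI : is_ideal I.
Variable sg : hmm_strategy_I.
Hypothesis Hsg : I_wins_HMM I sg.

Definition allw a := flat_map (fun n => words n a) (seq 0 (S a)).
Definition Mb a := S (list_max (flat_map sg (allw a))).

Lemma Mb_spec : forall a l, length l <= a -> (forall x, In x l -> x < a) -> forall y, In y (sg l) -> y < Mb a.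
Proof.
  intros a l Hl Hx y Hy. unfold Mb.
  assert (In y (flat_map sg (allw a))).
  { apply in_flat_map. exists l. split; auto. unfold allw. apply in_flat_map.
    exists (length l). split. apply in_seq. lia. apply words_in; auto. }
  pose proof (proj1 (list_max_le (flat_map sg (allw a)) _) (le_n _)) as F.
  rewrite Forall_forall in F. specialize (F _ H). lia.
Qed.

Fixpoint av (i : nat) : nat :=
  match i with
  | 0 => 0
  | S i' => Nat.max (S (av i')) (Mb (av i'))
  end.

Lemma av_S : forall i, av i < av (S i).
Proof. intros. change (av (S i)) with (Nat.max (S (av i)) (Mb (av i))). lia. Qed.
Lemma av_M : forall i, Mb (av i) <= av (S i).
Proof. intros. change (av (S i)) with (Nat.max (S (av i)) (Mb (av i))). lia. Qed.
Lemma av_le : forall i j, i <= j -> av i <= av j.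
Proof. intros i j H. induction H. lia. pose proof (av_S m). lia. Qed.
Lemma av_ge : forall i, i <= av i.
Proof. induction i. simpl; lia. pose proof (av_S i). lia. Qed.

Fixpoint blk (n : nat) : nat :=
  match n with
  | 0 => 0
  | S n' => if av (S (blk n')) <=? S n' then S (blk n') else blk n'
  end.

Lemma blk_spec : forall n, av (blk n) <= n /\ n < av (S (blk n)).
Proof.
  induction n.
  - split; [simpl; lia | exact (av_S 0)].
  - cbn [blk]. destruct (Nat.leb_spec (av (S (blk n))) (S n)).
    + pose proof (av_S (S (blk n))). lia.
    + lia.
Qed.

Definition fB (n : nat) : Delta :=
  exist (fun p : nat * nat => snd p <= fst p) (av (S (blk n)), n)
        (Nat.lt_le_incl _ _ (proj2 (blk_spec n))).

Definition run (e : nat) (g : nat -> nat) (k : nat) : nat :=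
  let v := g (av (2 * k + e + 2)) in
  if (av (2 * k + e + 1) <=? v) && (v <? av (2 * k + e + 2)) then v else av (2 * k + e + 1).

Lemma run_bounds : forall e g k, av (2 * k + e + 1) <= run e g k < av (2 * k + e + 2).
Proof.
  intros. unfold run.
  pose proof (av_S (2*k+e+1)). replace (S (2*k+e+1)) with (2*k+e+2) in * by lia.
  destruct (Nat.leb_spec (av (2 * k + e + 1)) (g (av (2 * k + e + 2)))); cbn [andb].
  - destruct (Nat.ltb_spec (g (av (2 * k + e + 2))) (av (2 * k + e + 2))); lia.
  - lia.
Qed.

Lemma run_legal : forall e g k, ~ In (run e g k) (sg (prefix (run e g) k)).
Proof.
  intros e g k Hin.
  assert (H : run e g k < Mb (av (2 * k + e))).
  { apply (Mb_spec _ (prefix (run e g) k)); auto.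
    - rewrite prefix_length. pose proof (av_ge (2*k+e)). lia.
    - intros x Hx. apply In_prefix in Hx. destruct Hx as [j [Hj E]]. subst.
      pose proof (run_bounds e g j). pose proof (av_le (2*j+e+2) (2*k+e)). lia. }
  pose proof (av_M (2*k+e)). pose proof (run_bounds e g k).
  replace (S (2*k+e)) with (2*k+e+1) in * by lia. lia.
Qed.

Lemma run_I : forall e g, I (fun m => exists k, run e g k = m).
Proof. intros. apply Hsg. apply run_legal. Qed.

Definition Qg g n := (exists k, run 0 g k = n) \/ (exists k, run 1 g k = n).

Lemma Qlist_I : forall fs, I (fun n => exists g, In g fs /\ Qg g n).
Proof.
  induction fs.
  - apply (I_fin I HI). exists 0. intros n [g [[] _]].
  - apply (I_mono I HI _ _ (I_union I HI _ _ (I_union I HI _ _ (run_I 0 a) (run_I 1 a)) IHfs)).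
    intros n [g [[Hg|Hg] HQ]]. subst. left. exact HQ. right. eauto.
Qed.

Lemma one_three : KB_le ED_fin I.
Proof.
  exists fB. split.
  - intros x. exists (S (snd (proj1_sig x))). intros n Hn. subst. simpl. lia.
  - intros B [A [[N [fs HA]] HB]].
    pose proof (I_union I HI _ _ (I_fin I HI (fun n => n < Nat.max N (av 1)) (ex_intro (fun K => forall n, n < Nat.max N (av 1) -> n < K) (Nat.max N (av 1)) (fun n H => H))) (Qlist_I fs)) as HU.
    apply (I_mono I HI _ _ HU). intros n Hn. apply HB in Hn. change (A (av (S (blk n)), n)) in Hn.
    pose proof (blk_spec n) as [Hb1 Hb2].
    destruct (HA _ _ Hn) as [Hlt | [g [Hg Eg]]].
    + left. lia.
    + destruct (blk n) as [|i] eqn:Ei.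
      * left. lia.
      * right. exists g. split; auto. unfold Qg.
        destruct (Nat.Even_or_Odd i) as [[k Hk]|[k Hk]].
        -- left. exists k. unfold run. replace (2 * k + 0 + 2) with (S (S i)) by lia.
           replace (2 * k + 0 + 1) with (S i) by lia. rewrite <- Eg.
           destruct (Nat.leb_spec (av (S i)) n); [|lia]. destruct (Nat.ltb_spec n (av (S (S i)))); [|lia]. reflexivity.
        -- right. exists k. unfold run. replace (2 * k + 1 + 2) with (S (S i)) by lia.
           replace (2 * k + 1 + 1) with (S i) by lia. rewrite <- Eg.
           destruct (Nat.leb_spec (av (S i)) n); [|lia]. destruct (Nat.ltb_spec n (av (S (S i)))); [|lia]. reflexivity.
Qed.
End OneThree.

Fixpoint endb (b : nat) (l : list nat) : nat :=
  match l with [] => b | x :: r => endb (S x) r end.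
Fixpoint okf (b : nat) (l : list nat) : Prop :=
  match l with [] => True | x :: r => b <= x /\ okf (S x) r end.

Lemma okf_app : forall l1 b l2, okf b (l1 ++ l2) <-> okf b l1 /\ okf (endb b l1) l2.
Proof. induction l1; intros; simpl. tauto. rewrite IHl1. tauto. Qed.

Lemma okf_ge : forall l b x, okf b l -> In x l -> b <= x.
Proof. induction l; intros b x H Hx; simpl in *. contradiction.
  destruct H as [H1 H2]. destruct Hx as [Hx|Hx]. subst; auto. specialize (IHl _ _ H2 Hx). lia. Qed.

Lemma okf_nth : forall l b i j, okf b l -> i < j < length l -> nth i l 0 < nth j l 0.
Proof.
  induction l; intros b i j H Hij; simpl in *. lia.
  destruct H as [H1 H2]. destruct j. lia. destruct i.
  - assert (In (nth j l 0) l) by (apply nth_In; lia). pose proof (okf_ge _ _ _ H2 H). lia.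
  - apply (IHl (S a)); auto; lia.
Qed.

Lemma prefix_nth : forall s m i d, i < m -> nth i (prefix s m) d = s i.
Proof. intros. unfold prefix. rewrite (nth_indep _ d (s 0)). rewrite map_nth, seq_nth; auto.
  rewrite length_map, length_seq; auto. Qed.

Lemma list_max_In : forall l x, In x l -> x <= list_max l.
Proof. intros l x H. pose proof (proj1 (list_max_le l _) (le_n _)) as F.
  rewrite Forall_forall in F. auto. Qed.

Section TwoOne.
Variable I : (nat -> Prop) -> Prop.
Hypothesis HI : is_ideal I.
Variable tau : tall_strategy_II.
Hypothesis Htau : II_wins_tallness I tau.

Definition Good h x := exists J, okf (endb 0 h) (J ++ [x]) /\ tau (h ++ J ++ [x]) = true.

Lemma good_cof : forall h, okf 0 h -> exists N, forall x, N <= x -> Good h x.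
Proof.
  intros h Hh. apply NNPP. intros Hn.
  assert (Hb : forall N, exists x, N <= x /\ ~ Good h x).
  { intros N. apply NNPP. intros H2. apply Hn. exists N. intros x Hx.
    apply NNPP. intros H3. apply H2. eauto. }
  set (nb := fun N => epsilon (inhabits 0) (fun x => N <= x /\ ~ Good h x)).
  assert (Hnb : forall N, N <= nb N /\ ~ Good h (nb N)).
  { intros N. apply (epsilon_spec (inhabits 0) (fun x => N <= x /\ ~ Good h x)). apply Hb. }
  set (y := fix y i := match i with 0 => nb (endb 0 h) | S i' => nb (S (y i')) end).
  assert (Hy0 : y 0 = nb (endb 0 h)) by reflexivity.
  assert (HyS : forall i, y (S i) = nb (S (y i))) by reflexivity.
  clearbody y.
  assert (Hoky : forall i j b, b <= y j -> okf b (map y (seq j i))).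
  { induction i; intros j b Hb'; simpl; auto. split; auto. apply IHi.
    rewrite HyS. apply Hnb. }
  set (s := fun k => if k <? length h then nth k h 0 else y (k - length h)).
  assert (Hpre : forall i, prefix s (length h + i) = h ++ map y (seq 0 i)).
  { induction i.
    - rewrite Nat.add_0_r, app_nil_r. apply (nth_ext _ _ 0 0).
      rewrite prefix_length; auto. intros n Hn'. rewrite prefix_length in Hn'.
      rewrite prefix_nth; auto. unfold s. destruct (Nat.ltb_spec n (length h)); auto; lia.
    - rewrite Nat.add_succ_r, prefix_S, IHi, seq_S, map_app, app_assoc. f_equal. simpl.
      unfold s. destruct (Nat.ltb_spec (length h + i) (length h)). lia.
      f_equal. f_equal. lia. }
  assert (Hok : forall i, okf 0 (h ++ map y (seq 0 i))).
  { intros i. apply okf_app. split; auto. apply Hoky. rewrite Hy0. apply Hnb. }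
  assert (Hs : strictly_increasing s).
  { intros k. pose proof (Hok (S (S k))) as Ho. rewrite <- Hpre in Ho.
    rewrite <- (prefix_nth s (length h + S (S k)) k 0) by lia.
    rewrite <- (prefix_nth s (length h + S (S k)) (S k) 0) by lia.
    apply (okf_nth _ 0); auto. rewrite prefix_length. lia. }
  destruct (Htau s Hs) as [Hinf _].
  destruct (Hinf (S (list_max h))) as [m [Hm [k [Hk Ht]]]].
  destruct (Nat.lt_ge_cases k (length h)) as [Hlt|Hge].
  - unfold s in Hk. destruct (Nat.ltb_spec k (length h)); [|lia].
    subst m. assert (In (nth k h 0) h) by (apply nth_In; auto).
    pose proof (list_max_In _ _ H0). lia.
  - set (i := k - length h).
    assert (Hk' : S k = length h + S i) by lia. rewrite Hk', Hpre in Ht.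
    assert (Hsk : s k = y i). { unfold s. destruct (Nat.ltb_spec k (length h)); [lia|reflexivity]. }
    apply (proj2 (Hnb (match i with 0 => endb 0 h | S i' => S (y i') end))).
    assert (Hyi : y i = nb (match i with 0 => endb 0 h | S i' => S (y i') end)).
    { destruct i; auto. }
    rewrite <- Hyi. exists (map y (seq 0 i)). split.
    + change [y i] with (map y [0 + i]). rewrite <- map_app, <- seq_S.
      apply Hoky. rewrite Hy0. apply Hnb.
    + rewrite seq_S, map_app in Ht. exact Ht.
Qed.

Definition Bd (h : list nat) : nat := epsilon (inhabits 0) (fun N => forall x, N <= x -> Good h x).
Definition Jc (h : list nat) (x : nat) : list nat :=
  epsilon (inhabits []) (fun J => okf (endb 0 h) (J ++ [x]) /\ tau (h ++ J ++ [x]) = true).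
Definition step (h : list nat) (x : nat) : list nat := h ++ Jc h x ++ [x].
Definition Hh (l : list nat) : list nat := fold_left step l [].
Definition sigma21 (l : list nat) : list nat := seq 0 (Bd (Hh l)).

Lemma Jc_spec : forall h x, okf 0 h -> Bd h <= x ->
  okf (endb 0 h) (Jc h x ++ [x]) /\ tau (h ++ Jc h x ++ [x]) = true.
Proof.
  intros h x Hh0 Hx. unfold Jc. apply (epsilon_spec (inhabits [])
    (fun J => okf (endb 0 h) (J ++ [x]) /\ tau (h ++ J ++ [x]) = true)).
  assert (HB : forall y, Bd h <= y -> Good h y).
  { unfold Bd. apply (epsilon_spec (inhabits 0) (fun N => forall x, N <= x -> Good h x)).
    apply good_cof; auto. }
  apply HB; auto.
Qed.

Lemma two_one : I_wins_HMM I sigma21.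
Proof.
  intros s Hs.
  set (hist := fun k => Hh (prefix s k)).
  assert (HhS : forall k, hist (S k) = step (hist k) (s k)).
  { intros k. unfold hist, Hh. rewrite prefix_S, fold_left_app. reflexivity. }
  assert (HB : forall k, Bd (hist k) <= s k).
  { intros k. specialize (Hs k). unfold sigma21 in Hs.
    destruct (Nat.lt_ge_cases (s k) (Bd (Hh (prefix s k)))); auto.
    exfalso. apply Hs. apply in_seq. lia. }
  assert (Hok : forall k, okf 0 (hist k)).
  { induction k. simpl. auto. rewrite HhS. unfold step. apply okf_app. split; auto.
    apply Jc_spec; auto. }
  assert (Hlen : forall k, k <= length (hist k)).
  { induction k. lia. rewrite HhS. unfold step. rewrite !length_app. simpl. lia. }
  assert (Hpref : forall k k', k <= k' -> exists r, hist k' = hist k ++ r).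
  { intros k k' H. induction H. exists []. rewrite app_nil_r; auto.
    destruct IHle as [r Hr]. rewrite HhS, Hr. unfold step. exists (r ++ Jc (hist k ++ r) (s m) ++ [s m]).
    rewrite !app_assoc. reflexivity. }
  set (t := fun n => nth n (hist (S n)) 0).
  assert (Htn : forall K n, n < length (hist K) -> t n = nth n (hist K) 0).
  { intros K n Hn. unfold t. destruct (Nat.le_ge_cases K (S n)) as [H|H].
    - destruct (Hpref _ _ H) as [r Hr]. rewrite Hr, app_nth1; auto.
    - destruct (Hpref _ _ H) as [r Hr]. rewrite Hr, app_nth1; auto. }
  assert (Hpt : forall K m, m <= length (hist K) -> prefix t m = firstn m (hist K)).
  { intros K m Hm. apply (nth_ext _ _ 0 0).
    rewrite prefix_length, firstn_length_le; auto.
    intros n Hn. rewrite prefix_length in Hn. rewrite prefix_nth, nth_firstn; auto.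
    destruct (Nat.ltb_spec n m); [|lia]. apply Htn. lia. }
  assert (Ht : strictly_increasing t).
  { intros n. specialize (Hlen (S (S n))).
    rewrite (Htn (S (S n)) n) by lia. rewrite (Htn (S (S n)) (S n)) by lia.
    apply (okf_nth _ 0); auto. }
  destruct (Htau t Ht) as [_ HIW].
  apply (I_mono I HI _ _ HIW). intros m [k Hk]. subst m.
  set (J := Jc (hist k) (s k)).
  exists (length (hist k ++ J)).
  assert (Eh : hist (S k) = (hist k ++ J) ++ [s k]).
  { rewrite HhS. unfold step. rewrite app_assoc. reflexivity. }
  assert (HL : length (hist (S k)) = S (length (hist k ++ J))).
  { rewrite Eh, length_app. simpl. lia. }
  split.
  - rewrite (Htn (S k)) by lia. rewrite Eh, app_nth2 by lia. rewrite Nat.sub_diag. reflexivity.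
  - rewrite (Hpt (S k)) by lia. rewrite firstn_all2 by lia.
    rewrite HhS. unfold step. apply Jc_spec; auto.
Qed.
End TwoOne.

Theorem mainTheorem13 (I : (nat -> Prop) -> Prop) (HI : is_ideal I) :
  ((exists sigma : hmm_strategy_I, I_wins_HMM I sigma) <->
   (exists sigma : tall_strategy_II, II_wins_tallness I sigma)) /\
  ((exists sigma : tall_strategy_II, II_wins_tallness I sigma) <->
   KB_le ED_fin I).
Proof.
  assert (H13 : (exists sigma : hmm_strategy_I, I_wins_HMM I sigma) -> KB_le ED_fin I).
  { intros [sg Hsg]. exact (one_three I HI sg Hsg). }
  assert (H32 : KB_le ED_fin I -> exists sigma : tall_strategy_II, II_wins_tallness I sigma).
  { intros [f [Hf Hp]]. exists (tau3 f). exact (three_two I HI f Hf Hp). }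
  assert (H21 : (exists sigma : tall_strategy_II, II_wins_tallness I sigma) ->
                exists sigma : hmm_strategy_I, I_wins_HMM I sigma).
  { intros [tau Ht]. exists (sigma21 tau). exact (two_one I HI tau Ht). }
  split; split; auto.
Qed.
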